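(* Let $G$ be a finite simple graph with at least two vertices and maximum degree $k$, regarded as a slim Hoffman graph. Then $G$ is $(-k)$-reducible.
   Context: A Hoffman graph $\mathfrak{H}$ is a finite simple graph $H$ together with a labeling of each vertex as slim or fat, such that every fat vertex is adjacent to at least one slim vertex and the fat vertices are pairwise non-adjacent. $V^s(\mathfrak{H})$, $V^f(\mathfrak{H})$ denote the sets of slim and fat vertices; for a vertex $x$, $N^f_{\mathfrak{H}}(x)$ denotes the set of fat neighbours of $x$. $\mathfrak{H}$ is slim if it has no fat vertices; an ordinary graph is identified with a slim Hoffman graph. An induced Hoffman subgraph of $\mathfrak{H}$ is a Hoffman graph whose underlying graph is an induced subgraph of $H$, with the inherited labels. Writing the adjacency matrix of $H$ with fat vertices last as $\begin{pmatrix}A_s & C\\ C^T & O\end{pmatrix}$, set $B(\mathfrak{H})=A_s-CC^T$ (rows/columns indexed by slim vertices); $\lambda_{\min}(\mathfrak{H})$ is the smallest eigenvalue of $B(\mathfrak{H})$. A decomposition of $\mathfrak{H}$ is a family $\{\mathfrak{H}^i\}_{i=1}^n$ of induced Hoffman subgraphs such that: (i) $V(\mathfrak{H})=\bigcup_i V(\mathfrak{H}^i)$; (ii) $V^s(\mathfrak{H}^i)\cap V^s(\mathfrak{H}^j)=\emptyset$ for $i\ne j$; (iii) if $x\in V^s(\mathfrak{H}^i)$ and $y$ is a fat neighbour of $x$ in $\mathfrak{H}$, then $y\in V(\mathfrak{H}^i)$; (iv) if $x\in V^s(\mathfrak{H}^i)$, $y\in V^s(\mathfrak{H}^j)$, $i\neq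 j$, then $|N^f_{\mathfrak{H}}(x)\cap N^f_{\mathfrak{H}}(y)|\le 1$, with equality if and only if $x,y$ are adjacent. For a real $\alpha<0$, a Hoffman graph $\mathfrak{H}$ with $\lambda_{\min}(\mathfrak{H})\ge\alpha$ is $\alpha$-reducible if there exist a Hoffman graph $\mathfrak{H}'$ containing $\mathfrak{H}$ as an induced Hoffman subgraph and a decomposition $\{\mathfrak{H}^1,\mathfrak{H}^2\}$ of $\mathfrak{H}'$ with $\lambda_{\min}(\mathfrak{H}^i)\ge\alpha$ and $V^s(\mathfrak{H}^i)\cap V^s(\mathfrak{H})\ne\emptyset$ for $i=1,2$. *)

(* Defs.v *)
From HB Require Import structures.
From mathcomp Require Import all_boot all_order all_algebra.
Set Implicit Arguments. Unset Strict Implicit. Unset Printing Implicit Defensive.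
Import Order.TTheory GRing.Theory Num.Theory.

Definition is_hoffman (V : finType) (adj : rel V) (fat : pred V) : Prop :=
  [/\ symmetric adj, irreflexive adj,
      (forall x y, fat x -> fat y -> ~~ adj x y)
    & (forall y, fat y -> exists x, ~~ fat x && adj x y)].

Definition induced_is_hoffman (V : finType) (adj : rel V) (fat : pred V)
    (W : {set V}) : Prop :=
  forall y, y \in W -> fat y -> exists2 x, x \in W & ~~ fat x && adj x y.

Definition slimset (V : finType) (fat : pred V) (W : {set V}) : {set V} :=
  [set x in W | ~~ fat x].

(* B = A_s - C C^T of the induced Hoffman subgraph on W, rows/columns indexed
   by the slim vertices of W (enumerated via enum_val). *)
Definition Bmat (R : nzRingType) (V : finType) (adj : rel V) (fat : pred V)
    (W : {set V}) : 'M[R]_#|slimset fat W| :=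
  \matrix_(i, j)
    let x := enum_val i in let y := enum_val j in
    ((adj x y)%:R - #|[set z in W | fat z && adj x z && adj y z]|%:R)%R.

(* lambda_min(induced subgraph on W) >= alpha : every eigenvalue of B is >= alpha
   (over a real closed field all eigenvalues of the symmetric matrix B lie in R). *)
Definition lambda_min_ge (R : rcfType) (V : finType) (adj : rel V) (fat : pred V)
    (W : {set V}) (alpha : R) : Prop :=
  forall a : R, eigenvalue (Bmat R adj fat W) a -> (alpha <= a)%R.

Definition fatnbr (V : finType) (adj : rel V) (fat : pred V) (x : V) : {set V} :=
  [set y | fat y && adj x y].

Definition decomposition (V : finType) (adj : rel V) (fat : pred V)
    (I : finType) (W : I -> {set V}) : Prop :=
  [/\ (forall i, induced_is_hoffman adj fat (W i)),
      (forall v : V, exists i, v \in W i),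
      (forall i j, i != j -> [disjoint slimset fat (W i) & slimset fat (W j)]),
      (forall i x y, x \in slimset fat (W i) -> fat y -> adj x y -> y \in W i)
    & (forall i j x y, i != j -> x \in slimset fat (W i) -> y \in slimset fat (W j) ->
         (#|fatnbr adj fat x :&: fatnbr adj fat y| <= 1)%N /\
         ((#|fatnbr adj fat x :&: fatnbr adj fat y| == 1%N) = adj x y))].

(* alpha-reducibility of the Hoffman graph (V, adj, fat); it includes the
   standing requirement lambda_min >= alpha. H' contains H as induced Hoffman
   subgraph via an injective map f preserving adjacency and labels. *)
Definition alpha_reducible (R : rcfType) (V : finType) (adj : rel V) (fat : pred V)
    (alpha : R) : Prop :=
  lambda_min_ge adj fat [set: V] alpha /\
  exists (V' : finType) (adj' : rel V') (fat' : pred V') (f : V -> V')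
         (W : bool -> {set V'}),
    [/\ is_hoffman adj' fat', injective f,
        (forall x y, adj' (f x) (f y) = adj x y)
      & (forall x, fat' (f x) = fat x)] /\
    [/\ decomposition adj' fat' W,
        (forall i, lambda_min_ge adj' fat' (W i) alpha)
      & (forall i, exists x, ~~ fat x /\ f x \in slimset fat' (W i))].

Definition maxdeg (V : finType) (adj : rel V) : nat :=
  \max_(x : V) #|[set y | adj x y]|.

(* Main.v *)
Require Import Defs.
From HB Require Import structures.
From mathcomp Require Import all_boot all_order all_algebra.
Import Order.TTheory GRing.Theory Num.Theory.
Open Scope ring_scope.
Set Implicit Arguments. Unset Strict Implicit.

Lemma eig_bound (R : rcfType) n (M : 'M[R]_n) (k : R) :
  (forall j, \sum_i `|M i j| <= k) -> forall a, eigenvalue M a -> -k <= a.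
Proof.
move=> hk a /eigenvalueP [v hv vn0].
case: n M v hk hv vn0 => [|n] M v hk hv vn0.
  by rewrite thinmx0 eqxx in vn0.
pose j := [arg max_(j > ord0) `|v 0 j|]%O.
have hmax : forall i, `|v 0 i| <= `|v 0 j|.
  rewrite /j; case: (Order.TotalTheory.arg_maxP (fun j => `|v 0 j|) (isT : predT ord0)) => j0 _ hj0 i.
  exact: hj0.
have vj0 : 0 < `|v 0 j|.
  rewrite normr_gt0; apply: contraNneq vn0 => h.
  apply/eqP/rowP => i; rewrite mxE; apply/eqP; rewrite -normr_eq0 eq_le normr_ge0 andbT.
  by have := hmax i; rewrite h normr0.
have e : \sum_i v 0 i * M i j = a * v 0 j.
  by have := congr1 (fun w : 'rV_n.+1 => w 0 j) hv; rewrite !mxE.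
have h1 : `|a| * `|v 0 j| <= `|v 0 j| * k.
  rewrite -normrM -e.
  apply: (le_trans (ler_norm_sum _ _ _)).
  apply: (@le_trans _ _ (\sum_i `|v 0 j| * `|M i j|)).
    apply: ler_sum => i _; rewrite normrM; exact: (@ler_wpM2r _ _ (normr_ge0 _) _ _ (hmax i)).
  by rewrite -mulr_sumr; exact: (@ler_wpM2l _ _ (normr_ge0 _) _ _ (hk j)).
have : `|a| <= k by rewrite -(ler_pM2r vj0) [k * _]mulrC.
by rewrite ler_norml => /andP [].
Qed.

Lemma lmin_nat (R : rcfType) (V : finType) (adj : rel V) (fat : pred V) (W : {set V}) (k : nat) :
  (forall y, y \in slimset fat W ->
     (\sum_(x in slimset fat W) (adj x y + #|[set z in W | fat z && adj x z && adj y z]|) <= k)%N) ->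
  lambda_min_ge adj fat W (- (k%:R : R)).
Proof.
move=> hk a ha; apply: (@eig_bound R _ (Bmat R adj fat W) _ _ a ha) => j.
have := hk _ (enum_valP j); rewrite (big_enum_val (A := mem (slimset fat W))) /= => hj.
apply: (@le_trans _ _ ((\sum_(i < #|slimset fat W|) (adj (enum_val i) (enum_val j) +
     #|[set z in W | fat z && adj (enum_val i) z && adj (enum_val j) z]|)%N)%:R)).
  rewrite natr_sum; apply: ler_sum => i _; rewrite mxE natrD.
  apply: (le_trans (ler_normB _ _)); rewrite !ger0_norm //.
by rewrite ler_nat.
Qed.

Lemma sum_b (I : finType) (P : pred I) (b : pred I) :
  (\sum_(i | P i) (b i : nat))%N = #|[set i | P i && b i]|.
Proof.
rewrite -sum1_card big_mkcond [RHS]big_mkcond /=; apply: eq_bigr => i _.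
by rewrite !inE; case: (P i); case: (b i).
Qed.

Lemma card_sumT (A B : finType) (S : {set (A + B)%type}) :
  #|S| = (#|[set x | inl x \in S]| + #|[set w | inr w \in S]|)%N.
Proof.
rewrite -sum1_card (big_sumType _ (fun a => a \in S)) /=.
rewrite -!sum1_card; congr (_ + _)%N; apply: eq_bigl => x; by rewrite inE.
Qed.

Definition FT (V : finType) (adj : rel V) (v0 : V) := {w : V | adj v0 w}.

Definition adjH (V : finType) (adj : rel V) (v0 : V) : rel (V + FT adj v0)%type :=
  fun a b => match a, b with
  | inl x, inl y => adj x y
  | inl x, inr w => (x == v0) || (x == val w)
  | inr w, inl x => (x == v0) || (x == val w)
  | _, _ => false end.

Definition fatH (V : finType) (adj : rel V) (v0 : V) : pred (V + FT adj v0)%type :=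
  fun a => if a is inr _ then true else false.

Definition WH (V : finType) (adj : rel V) (v0 : V) (b : bool) : {set (V + FT adj v0)%type} :=
  [set a | if a is inl x then (x == v0) == b else true].

Arguments adjH {V} adj v0.
Arguments fatH {V} adj v0.
Arguments WH {V} adj v0 b.

Lemma hoffH (V : finType) (adj : rel V) (v0 : V) (adj_sym : symmetric adj) (adj_irr : irreflexive adj) :
  is_hoffman (adjH adj v0) (fatH adj v0).
Proof.
split.
- by move=> [x|w] [y|u] //=; rewrite adj_sym.
- by move=> [x|w] //=; rewrite adj_irr.
- by move=> [x|w] [y|u].
- move=> [x|w] //= _; exists (inl v0) => /=; by rewrite eqxx.
Qed.

Lemma card_ft (V : finType) (adj : rel V) (v0 u : V) :
  #|[set w : FT adj v0 | val w == u]| = adj v0 u.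
Proof.
case: (boolP (adj v0 u)) => h.
  rewrite (_ : [set w | _] = [set (exist _ u h : FT adj v0)]) ?cards1 //.
  by apply/setP => w; rewrite !inE -val_eqE.
rewrite (_ : [set w | _] = set0) ?cards0 //; apply/setP => w; rewrite !inE.
apply/negP => /eqP e; move: (valP w); by rewrite /= e (negbTE h).
Qed.

Lemma card_fatnbr (V : finType) (adj : rel V) (v0 u : V) : u != v0 ->
  #|fatnbr (adjH adj v0) (fatH adj v0) (inl u)| = adj v0 u.
Proof.
move=> un; rewrite card_sumT.
have -> : [set x | inl x \in fatnbr (adjH adj v0) (fatH adj v0) (inl u)] = set0.
  by apply/setP => x; rewrite !inE.
have -> : [set w | inr w \in fatnbr (adjH adj v0) (fatH adj v0) (inl u)] = [set w | val w == u].
  by apply/setP => w; rewrite !inE /= (negbTE un) eq_sym.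
by rewrite cards0 add0n card_ft.
Qed.

Lemma fatnbr_v0 (V : finType) (adj : rel V) (v0 u : V) :
  fatnbr (adjH adj v0) (fatH adj v0) (inl v0) :&: fatnbr (adjH adj v0) (fatH adj v0) (inl u)
  = fatnbr (adjH adj v0) (fatH adj v0) (inl u).
Proof. by apply/setP => [[x|w]]; rewrite !inE //= eqxx. Qed.

Lemma slimWH (V : finType) (adj : rel V) (v0 : V) b a :
  (a \in slimset (fatH adj v0) (WH adj v0 b)) =
  (if a is inl x then (x == v0) == b else false).
Proof. by case: a => [x|w]; rewrite !inE /= ?andbT. Qed.

Lemma decH (V : finType) (adj : rel V) (v0 : V) (adj_sym : symmetric adj) (adj_irr : irreflexive adj) :
  decomposition (adjH adj v0) (fatH adj v0) (WH adj v0).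
Proof.
split.
- move=> i [x|w] //= hw _.
  case: i hw => _.
    by exists (inl v0); rewrite /WH ?inE /= ?eqxx.
  exists (inl (val w)); rewrite /WH ?inE /= ?eqxx ?orbT //.
  rewrite eqbF_neg; apply/eqP => e; move: (proj2_sig w); by rewrite e adj_irr.
- move=> [x|w]; first by exists (x == v0); rewrite /WH inE.
  by exists true; rewrite /WH inE.
- move=> i j ij; apply/pred0P => a /=; rewrite !slimWH.
  case: a => // x; case: (x == v0); case: i j ij => [] [] //.
- by move=> i x [y|w] //; rewrite /WH inE.
- move=> i j [x|w] [y|u] // ij; rewrite !slimWH => hx hy //.
  have [ex|nx] := eqVneq x v0.
    have ny : y != v0 by apply: contraNneq ij => ey; rewrite -(eqP hx) -(eqP hy) ex ey eqxx.
    rewrite ex fatnbr_v0 card_fatnbr //=; by case: (adj v0 y).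
  have ey : y = v0.
    apply/eqP; move: ij; rewrite -(eqP hx) -(eqP hy) (negbTE nx); by case: (y == v0).
  rewrite ey setIC fatnbr_v0 card_fatnbr //= [adj x v0]adj_sym; by case: (adj v0 x).
Qed.

Lemma deg_le (V : finType) (adj : rel V) y : (#|[set x | adj y x]| <= maxdeg adj)%N.
Proof. rewrite /maxdeg; exact: (@leq_bigmax V (fun y => #|[set x | adj y x]|) y). Qed.

Lemma sumS (V : finType) (adj : rel V) (v0 : V) b (F : (V + FT adj v0)%type -> nat) :
  (\sum_(a in slimset (fatH adj v0) (WH adj v0 b)) F a = \sum_(x | (x == v0) == b) F (inl x))%N.
Proof.
rewrite (big_sumType _ (fun a => a \in slimset (fatH adj v0) (WH adj v0 b))) /=.
rewrite [X in (_ + X)%N]big_pred0 => [|w]; last by rewrite slimWH.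
by rewrite addn0; apply: eq_bigl => x; rewrite slimWH.
Qed.

Lemma partT (R : rcfType) (V : finType) (adj : rel V) (v0 : V) (adj_irr : irreflexive adj) :
  lambda_min_ge (adjH adj v0) (fatH adj v0) (WH adj v0 true) (- ((maxdeg adj)%:R : R)).
Proof.
apply: lmin_nat => y; rewrite slimWH; case: y => // u; rewrite eqb_id => /eqP ->.
rewrite sumS (eq_bigl (pred1 v0)) => [|x]; last by rewrite eqb_id.
rewrite big_pred1_eq /= adj_irr add0n card_sumT.
have -> : [set x | inl x \in [set z in WH adj v0 true | fatH adj v0 z &&
      adjH adj v0 (inl v0) z && adjH adj v0 (inl v0) z]] = set0.
  by apply/setP => x; rewrite !inE andbF.
have -> : [set w | inr w \in [set z in WH adj v0 true | fatH adj v0 z &&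
      adjH adj v0 (inl v0) z && adjH adj v0 (inl v0) z]] = setT.
  by apply/setP => w; rewrite /WH !inE /= eqxx.
rewrite cards0 add0n cardsT card_sig.
apply: leq_trans (deg_le adj v0); apply: subset_leq_card; apply/subsetP => x; by rewrite !inE.
Qed.

Lemma cardC (V : finType) (adj : rel V) (v0 x u : V) : x != v0 -> u != v0 ->
  #|[set z in WH adj v0 false | fatH adj v0 z && adjH adj v0 (inl x) z && adjH adj v0 (inl u) z]|
  = ((x == u) && adj v0 u : nat).
Proof.
move=> xn un; rewrite card_sumT.
have -> : [set y | inl y \in [set z in WH adj v0 false | fatH adj v0 z &&
      adjH adj v0 (inl x) z && adjH adj v0 (inl u) z]] = set0.
  by apply/setP => y; rewrite !inE andbF.
have -> : [set w | inr w \in [set z in WH adj v0 false | fatH adj v0 z &&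
      adjH adj v0 (inl x) z && adjH adj v0 (inl u) z]] =
      [set w | (x == val w) && (u == val w)].
  by apply/setP => w; rewrite /WH !inE /= (negbTE xn) (negbTE un).
rewrite cards0 add0n.
case: (eqVneq x u) => [<-|xu] /=.
  rewrite -(card_ft adj v0 x); apply: eq_card => w; by rewrite !inE andbb eq_sym.
rewrite (_ : [set w | _] = set0) ?cards0 //; apply/setP => w; rewrite !inE.
apply/negP => /andP [/eqP e1 /eqP e2]; by rewrite e1 e2 eqxx in xu.
Qed.

Lemma partF (R : rcfType) (V : finType) (adj : rel V) (v0 : V) (adj_sym : symmetric adj) :
  lambda_min_ge (adjH adj v0) (fatH adj v0) (WH adj v0 false) (- ((maxdeg adj)%:R : R)).
Proof.
apply: lmin_nat => y; rewrite slimWH; case: y => // u; rewrite eqbF_neg => un.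
rewrite sumS.
rewrite (eq_bigr (fun x => adj x u + ((x == u) && adj v0 u : nat)))%N => [|x]; last first.
  by rewrite eqbF_neg => xn /=; rewrite cardC.
rewrite big_split /= sum_b (bigD1 u) /=; last by rewrite eqbF_neg.
rewrite eqxx /= big1 => [|x /andP [_ /negbTE ->] //]; rewrite addn0.
apply: leq_trans (deg_le adj u).
rewrite [X in (_ <= X)%N](cardsD1 v0) inE adj_sym addnC leq_add2l.
apply: subset_leq_card; apply/subsetP => x; rewrite !inE eqbF_neg => /andP [-> h]; by rewrite adj_sym.
Qed.

Unset Implicit Arguments.

Theorem mainTheorem1 (R : rcfType) (V : finType) (adj : rel V)
    (adj_sym : symmetric adj) (adj_irr : irreflexive adj)
    (hV : (2 <= #|V|)%N) :
  alpha_reducible adj pred0 (- ((maxdeg adj)%:R : R))%R.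
Proof.
split.
  apply: lmin_nat => y _.
  rewrite (eq_bigr (fun x => adj x y : nat)) => [|x _]; last first.
    by rewrite (_ : [set z in _ | _] = set0) ?cards0 ?addn0 //; apply/setP => z; rewrite !inE.
  rewrite sum_b; apply: leq_trans (deg_le adj y); apply: subset_leq_card.
  by apply/subsetP => x; rewrite !inE adj_sym => /andP [].
have /card_gt1P [v0 [v1 [_ _ v01]]] := hV.
exists (V + FT adj v0)%type, (adjH adj v0), (fatH adj v0), inl, (WH adj v0).
split; first split.
- exact: hoffH.
- by move=> x y [].
- by [].
- by [].
split.
- exact: decH.
- by case; [apply: partT | apply: partF].
- case.
    by exists v0; rewrite slimWH eqxx.
  exists v1; rewrite slimWH eqbF_neg; split => //; by rewrite eq_sym.
Qed.
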